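(* Fix a parameter value $\boldsymbol{\theta}_r$ satisfying the large-sample (Bernstein–von Mises and maximum-likelihood regularity) conditions described in the context, write $\delta_r=\delta(\boldsymbol{\theta}_r)\in\mathbb{R}$ for the true value of the marginal estimand, and let $\Lambda(\boldsymbol{\theta}_r)>0$ be the corresponding asymptotic variance constant. Fix interval endpoints $-\infty\le \delta_L<\delta_U\le\infty$, a point $u_r\in(0,1)$, and distributions for the covariates $\mathbf{X}$, the random effects $\mathbf{W}$ and the cluster sizes $n_j$. For each number of clusters $c>0$ define $$\hat{\delta}^{(c)}_r=\delta_r+\Phi^{-1}(u_r)\sqrt{\frac{\Lambda(\boldsymbol{\theta}_r)}{c}},\qquad \tau^{(c)}_r=\Phi\!\left(\frac{\delta_U-\hat{\delta}^{(c)}_r}{\sqrt{c^{-1}\Lambda(\boldsymbol{\theta}_r)}}\right)-\Phi\!\left(\frac{\delta_L-\hat{\delta}^{(c)}_r}{\sqrt{c^{-1}\Lambda(\boldsymbol{\theta}_r)}}\right),$$ where $\Phi$ is the standard normal CDF (with $\Phi(\infty)=1$, $\Phi(-\infty)=0$). Then, with $\operatorname{logit}(x)=\log(x)-\log(1-x)$, $$\lim_{c\to\infty}\frac{d}{dc}\operatorname{logit}\!\left(\tau^{(c)}_r\right)=\bigl(0.5-\mathbb{I}\{\delta_r\notin(\delta_L,\delta_U)\}\bigr)\times\min\left\{\frac{(\delta_U-\delta_r)^2}{\Lambda(\boldsymbol{\theta}_r)},\ \frac{(\delta_L-\delta_r)^2}{\Lambda(\boldsymbol{\theta}_r)}\r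ight\}.$$
   Context: Setting: clustered data from $c$ independent clusters, cluster $j$ having $n_j$ observations; the data consist of outcomes, binary treatment assignments $A\in\{0,1\}$, covariates $\mathbf{X}$, and unobserved cluster-level random effects $\mathbf{W}$ (not shared across clusters), modelled by a parametric model with parameter $\boldsymbol{\theta}$. The marginal estimand is $\delta(\boldsymbol{\theta})=\mu(\boldsymbol{\theta};1)-\mu(\boldsymbol{\theta};0)$, where $\mu(\boldsymbol{\theta};A)=\int\!\!\int\mu(\boldsymbol{\theta};A,\mathbf{X},\mathbf{W})p(\mathbf{X})p(\mathbf{W})\,d\mathbf{W}\,d\mathbf{X}$ is the population mean for treatment group $A$ marginalized over covariates and random effects. Assumptions: clusters are i.i.d., the likelihood satisfies the standard regularity conditions for asymptotic normality of the maximum likelihood estimator, and the analysis prior is absolutely continuous with positive density in a neighbourhood of $\boldsymbol{\theta}_r$. Under these conditions the maximum likelihood estimator of $\delta$ based on $c$ clusters is approximately $\mathcal{N}(\delta_r,c^{-1}\Lambda(\boldsymbol{\theta}_r))$ and the posterior of $\delta(\boldsymbol{\theta})$ is approximately $\mathcal{N}(\hat\delta^{(c)}_r,c^{-1}\Lambda(\boldsymbol{\theta}_r))$, where $\Lambda(\boldsymbol{\theta}_r)>0$ is the asymptotic variance (per cluster) of the estimator of $\delta$, determined by the Fisher information. The quantity $\tau^{(c)}_r$ is a proxy for the posterior probability of the hypothesis $H_1:\delta(\boldsymbol{\theta})\in(\delta_L,\delta_U)$. $\mathbb{I}\{\cdot\}$ denotes the indicator function. *)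

(* Defs.v *)
From Stdlib Require Import Reals.
From Coquelicot Require Import Coquelicot.
Open Scope R_scope.

Definition std_normal_pdf (t : R) : R := exp (- t ^ 2 / 2) / sqrt (2 * PI).

Definition Phi (x : R) : R :=
  RInt_gen std_normal_pdf (Rbar_locally m_infty) (at_point x).

Definition PhiBar (x : Rbar) : R :=
  match x with
  | Finite r => Phi r
  | p_infty => 1
  | m_infty => 0
  end.

Definition std_arg (d : Rbar) (m s : R) : Rbar :=
  match d with
  | Finite x => Finite ((x - m) / s)
  | p_infty => p_infty
  | m_infty => m_infty
  end.

Definition logit (x : R) : R := ln x - ln (1 - x).

(* hat delta^(c)_r, where z = Phi^{-1}(u_r) *)
Definition delta_hat (delta_r Lambda z c : R) : R :=
  delta_r + z * sqrt (Lambda / c).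

Definition tau (delta_r Lambda z : R) (dL dU : Rbar) (c : R) : R :=
  PhiBar (std_arg dU (delta_hat delta_r Lambda z c) (sqrt (/ c * Lambda)))
  - PhiBar (std_arg dL (delta_hat delta_r Lambda z c) (sqrt (/ c * Lambda))).

Definition ind_notin (dL dU : Rbar) (r : R) : R :=
  if Rbar_lt_dec dL (Finite r) then
    if Rbar_lt_dec (Finite r) dU then 0 else 1
  else 1.

Definition sq_scaled (d : Rbar) (r Lambda : R) : Rbar :=
  match d with
  | Finite x => Finite ((x - r) ^ 2 / Lambda)
  | _ => p_infty
  end.

(* Main.v *)
Require Import Defs.
From Stdlib Require Import Reals.
From Coquelicot Require Import Coquelicot.
From Stdlib Require Import Lra Psatz.
From mathcomp Require all_boot all_order all_algebra.
From mathcomp Require all_classical all_reals all_analysis.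
From mathcomp Require Rstruct Rstruct_topology gauss_integral.

Module MC.
From mathcomp Require Import all_boot all_order all_algebra.
From mathcomp Require Import all_classical all_reals all_analysis.
From mathcomp Require Import Rstruct Rstruct_topology gauss_integral.
Import Order.TTheory GRing.Theory Num.Theory.
Import numFieldNormedType.Exports.
Local Open Scope classical_set_scope.
Local Open Scope ring_scope.

Lemma bridge (f : R^o -> R^o) (x l : R) :
  derivable_pt_lim f x l -> is_derive (x : R^o) (1:R^o) f (l:R^o).
Proof.
move=> H.
have C : (fun h : R^o => h^-1 *: ((f \o shift (x:R^o)) (h *: (1:R^o)) - f x)) @ (0:R^o)^' --> (l:R^o).
  apply/cvgrPdist_lt => e e0.
  have [d Hd] := H e (elimT RltP e0).
  exists (pos d) => /=; first by apply/RltP; case: d {Hd}.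
  move=> t /= Ht tn0.
  rewrite sub0r normrN -RabsE in Ht.
  move: (Hd t (elimN eqP tn0) (elimT RltP Ht)) => /RltP; rewrite RabsE distrC.
  have -> : (t%:A : R^o) = t by rewrite -[t%:A]/(t * 1) mulr1.
  rewrite [t + x]addrC.
  by rewrite -[t^-1 *: _]/(t^-1 * _) mulrC.
apply: DeriveDef; first by apply/cvg_ex; exists l.
exact: cvg_lim.
Qed.

Import gauss_integral_proof.

Lemma stepA (F : R -> R) :
  (forall x, derivable_pt_lim F x (exp (- (x * x)))) ->
  forall y : R, 0 < y -> integral0_gauss y = F y - F 0.
Proof.
move=> HF.
have D : forall x : R, is_derive (x:R^o) (1:R^o) (F : R^o -> R^o) (gauss_fun x : R^o).
  move=> x; have := @bridge F x _ (HF x).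
  by rewrite RexpE /gauss_fun expr2.
have cF : forall x : R, {for (x:R^o), continuous (F : R^o -> R^o)}.
  move=> x; apply: differentiable_continuous.
  by apply/derivable1_diffP; exact: (@ex_derive _ _ _ _ _ _ _ (D x)).
move=> y y0.
rewrite /integral0_gauss /Rintegral.
rewrite (@continuous_FTC2 _ gauss_fun F 0 y y0) //.
- apply: continuous_subspaceT; exact: continuous_gauss_fun.
- split.
  + move=> z _; exact: (@ex_derive _ _ _ _ _ _ _ (D z)).
  + exact: cvg_at_right_filter (cF 0).
  + exact: cvg_at_left_filter (cF y).
- move=> z _; rewrite derive1E; exact: (@derive_val _ _ _ _ _ _ _ (D z)).
Qed.

Lemma stepC (F : R -> R) :
  (forall x, derivable_pt_lim F x (exp (- (x * x)))) ->
  (fun y => F y - F 0) @ +oo --> Num.sqrt pi / 2.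
Proof.
move=> HF.
have cvg_Ig : @integral0_gauss R x @[x --> +oo] --> Num.sqrt pi / 2.
  have : Num.sqrt (@integral0_gauss R x ^+ 2) @[x --> +oo]
      --> Num.sqrt (pi / 4).
    apply: continuous_cvg => //;
      [exact: sqrt_continuous|exact: cvg_integral0_gauss_sqr].
  rewrite sqrtrM ?pi_ge0// sqrtrV// (_ : 4 = 2 ^+ 2); last first.
    by rewrite expr2 -natrM.
  rewrite sqrtr_sqr ger0_norm//.
  rewrite (_ : (fun _ => Num.sqrt _) = integral0_gauss)//.
  apply/funext => r; rewrite sqrtr_sqr// ger0_norm//.
  exact: integral0_gauss_ge0.
apply: cvg_trans cvg_Ig; apply: near_eq_cvg.
near=> x; rewrite (@stepA F HF) //.
Unshelve. end_near.
Qed.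

Lemma piE : pi = PI :> R.
Proof.
pose g := (fun x : R => atan x - Ratan.atan x) : R^o -> R^o.
have Dg : forall x : R, is_derive (x:R^o) (1:R^o) g 0.
  move=> x.
  have h1 : is_derive (x:R^o) (1:R^o) (@atan R : R^o -> R^o) ((1 + x ^+ 2)^-1).
    apply: DeriveDef; first exact: derivable_atan.
    by rewrite -derive1E derive1_atan.
  have h2 := @bridge Ratan.atan x _ (Ratan.derivable_pt_lim_atan x).
  have := is_deriveB h1 h2.
  by rewrite RinvE RpowE subrr.
have [c _] := @MVT R g (fun _ => 0) 0 1 ltr01 (fun x _ => Dg x)
  (derivable_within_continuous (fun x _ => @ex_derive _ _ _ _ _ _ _ (Dg x))).
rewrite mul0r /g atan0 Ratan.atan_0 subrr subr0 => /eqP; rewrite subr_eq0 => /eqP.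
rewrite atan1 Ratan.atan_1 RdivE IZRposE INRE.
move/(congr1 (fun t => t * 4%:R)).
by rewrite !divfK // pnatr_eq0.
Qed.

Lemma gauss_half (F : R -> R) :
  (forall x, derivable_pt_lim F x (exp (- (x * x)))) ->
  forall eps : R, Rlt 0 eps -> exists M : R, forall y : R, Rlt M y ->
    Rlt (Rabs (F y - F 0 - sqrt PI / 2)%coqR) eps.
Proof.
move=> HF eps /RltP e0.
have H := @stepC F HF; rewrite piE in H. have [M [_ HM]] := (proj1 (@cvgrPdist_lt _ R^o _ _ _ (fun y => F y - F 0) _) H) eps e0.
exists M => y /RltP My.
apply/RltP; rewrite RabsE RsqrtE RdivE distrC.
exact: HM.
Qed.
End MC.


Open Scope R_scope.

Lemma flim_plus f g (x : Rbar) (a b : R) : is_lim f x a -> is_lim g x b ->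
  is_lim (fun y => f y + g y) x (a + b).
Proof. intros Hf Hg. eapply is_lim_plus; eauto. reflexivity. Qed.
Lemma flim_minus f g (x : Rbar) (a b : R) : is_lim f x a -> is_lim g x b ->
  is_lim (fun y => f y - g y) x (a - b).
Proof. intros Hf Hg. eapply is_lim_minus; eauto. reflexivity. Qed.
Lemma flim_mult f g (x : Rbar) (a b : R) : is_lim f x a -> is_lim g x b ->
  is_lim (fun y => f y * g y) x (a * b).
Proof. intros Hf Hg. apply (is_lim_mult f g x a b); auto. exact I. Qed.
Lemma flim_inv f (x : Rbar) (a : R) : is_lim f x a -> a <> 0 ->
  is_lim (fun y => / f y) x (/ a).
Proof. intros Hf Ha. apply (is_lim_inv f x a); auto. intro H; apply Ha; injection H; auto. Qed.
Lemma flim_div f g (x : Rbar) (a b : R) : is_lim f x a -> is_lim g x b -> b <> 0 ->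
  is_lim (fun y => f y / g y) x (a / b).
Proof. intros Hf Hg Hb. apply flim_mult; auto. apply flim_inv; auto. Qed.
Lemma flim_const (x : Rbar) (a : R) : is_lim (fun _ => a) x a.
Proof. apply is_lim_const. Qed.
Lemma flim_ext f g (x : Rbar) (a : R) : (forall y, f y = g y) -> is_lim f x a -> is_lim g x a.
Proof. intros H Hf. apply (is_lim_ext f g); auto. Qed.

Lemma is_derive_eq (f : R -> R) (x l l' : R) : is_derive f x l -> l = l' -> is_derive f x l'.
Proof. intros H E; subst; exact H. Qed.

Definition phi := std_normal_pdf.
Definition G (x : R) : R := RInt phi 0 x.

Lemma sqrt2PI_pos : 0 < sqrt (2 * PI).
Proof. apply sqrt_lt_R0. generalize PI_RGT_0; lra. Qed.

Lemma phi_pos x : 0 < phi x.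
Proof.
  unfold phi, std_normal_pdf. apply Rdiv_lt_0_compat. apply exp_pos. apply sqrt2PI_pos.
Qed.

Lemma phi_even x : phi (- x) = phi x.
Proof. unfold phi, std_normal_pdf. f_equal. f_equal. f_equal. ring. Qed.

Lemma phi_derive x : is_derive phi x (- x * phi x).
Proof.
  unfold phi, std_normal_pdf. auto_derive. auto.
  replace (- x ^ 2 / 2) with (- (x * (x * 1)) * / 2) by (unfold Rdiv; ring).
  field. apply Rgt_not_eq, sqrt2PI_pos.
Qed.

Lemma phi_cont x : continuous phi x.
Proof. exact (@ex_derive_continuous R_AbsRing R_NormedModule phi x (ex_intro _ _ (phi_derive x))). Qed.

Lemma G_derive x : is_derive G x (phi x).
Proof.
  apply is_derive_RInt with 0.
  - apply filter_forall. intros b. unfold G. apply (RInt_correct (V := R_CompleteNormedModule)). apply (ex_RInt_continuous (V := R_CompleteNormedModule)).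
    intros; apply phi_cont.
  - apply phi_cont.
Qed.

Lemma G0 : G 0 = 0.
Proof. unfold G. rewrite RInt_point. reflexivity. Qed.

Lemma sqrt2_pos : 0 < sqrt 2.
Proof. apply sqrt_lt_R0; lra. Qed.
Lemma sqrtPI_pos : 0 < sqrt PI.
Proof. apply sqrt_lt_R0. apply PI_RGT_0. Qed.

Lemma phi_sqrt2 x : sqrt PI * (sqrt 2 * phi (sqrt 2 * x)) = exp (- (x * x)).
Proof.
  unfold phi, std_normal_pdf.
  replace ((sqrt 2 * x) ^ 2) with (2 * (x * x)).
  2:{ simpl. replace (sqrt 2 * x * (sqrt 2 * x * 1)) with ((sqrt 2 * sqrt 2) * (x * x)) by ring.
      rewrite sqrt_sqrt; lra. }
  rewrite sqrt_mult by (generalize PI_RGT_0; lra).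
  replace (- (2 * (x * x)) / 2) with (- (x * x)) by field.
  field. split; apply Rgt_not_eq; [apply sqrtPI_pos | apply sqrt2_pos].
Qed.

Lemma G_lim_p : is_lim G p_infty (1/2).
Proof.
  set (F := fun u => sqrt PI * G (sqrt 2 * u)).
  assert (HF : forall x, derivable_pt_lim F x (exp (- (x*x)))).
  { intro x. apply is_derive_Reals. rewrite <- phi_sqrt2. unfold F.
    apply (is_derive_scal (fun u => G (sqrt 2 * u))).
    apply (is_derive_comp G (fun u => sqrt 2 * u)). apply G_derive.
    auto_derive; auto. ring. }
  apply is_lim_spec. intros eps.
  assert (He : 0 < eps * sqrt PI) by (apply Rmult_lt_0_compat; [apply cond_pos | apply sqrtPI_pos]).
  destruct (MC.gauss_half F HF (eps * sqrt PI) He) as [M HM].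
  exists (sqrt 2 * M). intros x Hx.
  assert (Hx' : M < x / sqrt 2).
  { apply Rmult_lt_reg_l with (sqrt 2). apply sqrt2_pos.
    replace (sqrt 2 * (x / sqrt 2)) with x. lra. field. apply Rgt_not_eq, sqrt2_pos. }
  specialize (HM _ Hx'). unfold F in HM.
  replace (sqrt 2 * (x / sqrt 2)) with x in HM by (field; apply Rgt_not_eq, sqrt2_pos).
  rewrite Rmult_0_r, G0, Rmult_0_r in HM.
  replace (sqrt PI * G x - 0 - sqrt PI / 2) with (sqrt PI * (G x - 1/2)) in HM by field.
  rewrite Rabs_mult, (Rabs_right (sqrt PI)) in HM by (left; apply sqrtPI_pos).
  rewrite Rmult_comm in HM.
  apply Rmult_lt_reg_r with (sqrt PI). apply sqrtPI_pos. exact HM.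
Qed.

Lemma G_lim_m : is_lim G m_infty (-1/2).
Proof.
  set (F := fun u => - sqrt PI * G (- (sqrt 2 * u))).
  assert (HF : forall x, derivable_pt_lim F x (exp (- (x*x)))).
  { intro x. apply is_derive_Reals. rewrite <- phi_sqrt2. unfold F.
    assert (H : is_derive (fun u => - sqrt PI * G (- (sqrt 2 * u))) x
                  (- sqrt PI * (- sqrt 2 * phi (- (sqrt 2 * x))))).
    { apply (is_derive_scal (fun u => G (- (sqrt 2 * u))) x (- sqrt PI)).
      apply (is_derive_comp G (fun u => - (sqrt 2 * u))). apply G_derive.
      auto_derive; auto. ring. }
    rewrite phi_even in H.
    replace (- sqrt PI * (- sqrt 2 * phi (sqrt 2 * x))) with (sqrt PI * (sqrt 2 * phi (sqrt 2 * x))) in H by ring.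
    exact H. }
  apply is_lim_spec. intros eps.
  assert (He : 0 < eps * sqrt PI) by (apply Rmult_lt_0_compat; [apply cond_pos | apply sqrtPI_pos]).
  destruct (MC.gauss_half F HF (eps * sqrt PI) He) as [M HM].
  exists (- (sqrt 2 * M)). intros x Hx.
  assert (Hx' : M < - x / sqrt 2).
  { apply Rmult_lt_reg_l with (sqrt 2). apply sqrt2_pos.
    replace (sqrt 2 * (- x / sqrt 2)) with (- x). lra. field. apply Rgt_not_eq, sqrt2_pos. }
  specialize (HM _ Hx'). unfold F in HM.
  replace (- (sqrt 2 * (- x / sqrt 2))) with x in HM by (field; apply Rgt_not_eq, sqrt2_pos).
  rewrite Rmult_0_r, Ropp_0, G0, Rmult_0_r in HM.
  replace (- sqrt PI * G x - 0 - sqrt PI / 2) with (- (sqrt PI * (G x - -1/2))) in HM by field.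
  rewrite Rabs_Ropp, Rabs_mult, (Rabs_right (sqrt PI)) in HM by (left; apply sqrtPI_pos).
  rewrite Rmult_comm in HM.
  apply Rmult_lt_reg_r with (sqrt PI). apply sqrtPI_pos. exact HM.
Qed.

Lemma Derive_G x : Derive G x = phi x.
Proof. apply is_derive_unique. apply G_derive. Qed.

Lemma Phi_eq x : Phi x = G x + 1/2.
Proof.
  assert (H : is_RInt_gen (Derive G) (Rbar_locally m_infty) (at_point x) (G x - (-1/2))).
  { apply is_RInt_gen_Derive.
    - apply filter_forall. intros ab y _. eexists; apply G_derive.
    - apply filter_forall. intros ab y _.
      apply continuous_ext with phi. intros; rewrite Derive_G; reflexivity.
      apply phi_cont.
    - exact G_lim_m.
    - intros P HP. exact (locally_singleton _ _ HP). }
  assert (H2 : is_RInt_gen phi (Rbar_locally m_infty) (at_point x) (G x - (-1/2))).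
  { eapply is_RInt_gen_ext; [| exact H].
    apply filter_forall. intros ab y _. apply Derive_G. }
  unfold Phi. change std_normal_pdf with phi. rewrite (is_RInt_gen_unique _ _ H2). lra.
Qed.

Lemma Phi_derive x : is_derive Phi x (phi x).
Proof.
  assert (H := is_derive_plus G (fun _ => 1/2) x (phi x) 0 (G_derive x) (is_derive_const _ _)).
  apply (is_derive_eq _ _ _ (phi x)) in H.
  2:{ unfold plus, zero; simpl; ring. }
  eapply is_derive_ext; [| exact H]. intros t; simpl. rewrite Phi_eq. reflexivity.
Qed.

Lemma flim_eqv f (x : Rbar) (a b : R) : is_lim f x a -> a = b -> is_lim f x b.
Proof. intros H E; subst; exact H. Qed.

Lemma Phi_lim_p : is_lim Phi p_infty 1.
Proof.
  apply flim_ext with (fun y => G y + 1/2). intros; rewrite Phi_eq; reflexivity.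
  apply flim_eqv with (1/2 + 1/2). apply flim_plus. apply G_lim_p. apply flim_const. lra.
Qed.

Lemma Phi_lim_m : is_lim Phi m_infty 0.
Proof.
  apply flim_ext with (fun y => G y + 1/2). intros; rewrite Phi_eq; reflexivity.
  apply flim_eqv with (-1/2 + 1/2). apply flim_plus. apply G_lim_m. apply flim_const. lra.
Qed.

Lemma Phi_incr x y : x < y -> Phi x < Phi y.
Proof.
  intros Hxy. apply (incr_function Phi m_infty p_infty phi); simpl; auto.
  - intros; apply Phi_derive.
  - intros; apply phi_pos.
Qed.

Lemma Phi_lt1 x : Phi x < 1.
Proof.
  apply Rlt_le_trans with (Phi (x + 1)). apply Phi_incr; lra.
  assert (H := is_lim_le_loc (fun _ => Phi (x+1)) Phi p_infty (Phi (x+1)) 1).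
  simpl in H. apply H.
  - exists (x + 1). intros y Hy. left. apply Phi_incr. exact Hy.
  - apply is_lim_const.
  - apply Phi_lim_p.
Qed.

Lemma Phi_gt0 x : 0 < Phi x.
Proof.
  apply Rle_lt_trans with (Phi (x - 1)). 2:{ apply Phi_incr; lra. }
  assert (H := is_lim_le_loc Phi (fun _ => Phi (x-1)) m_infty 0 (Phi (x-1))).
  simpl in H. apply H.
  - exists (x - 1). intros y Hy. left. apply Phi_incr. exact Hy.
  - apply Phi_lim_m.
  - apply is_lim_const.
Qed.

Lemma Phi0 : Phi 0 = 1/2.
Proof. rewrite Phi_eq, G0. lra. Qed.

Lemma Phi_sym x : Phi (- x) = 1 - Phi x.
Proof.
  set (h := fun y => Phi (- y) + Phi y).
  assert (Hd : forall y, is_derive h y 0).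
  { intro y. unfold h.
    assert (H1 : is_derive (fun y => Phi (- y)) y (-1 * phi (- y))).
    { apply (is_derive_comp Phi (fun y => - y)). apply Phi_derive.
      auto_derive; auto. }
    assert (H := is_derive_plus _ _ y _ _ H1 (Phi_derive y)).
    apply (is_derive_eq _ _ _ 0) in H. exact H.
    rewrite phi_even. unfold plus; simpl. ring. }
  destruct (MVT_gen h 0 x (fun _ => 0)) as [c [_ Hc]].
  - intros; apply Hd.
  - intros y _. apply continuity_pt_filterlim.
    apply (@ex_derive_continuous R_AbsRing R_NormedModule h y (ex_intro _ _ (Hd y))).
  - unfold h in Hc. rewrite Ropp_0, Phi0 in Hc. lra.
Qed.

Ltac sc := repeat split; first [apply Rgt_not_eq, sqrt2PI_pos | apply Rgt_not_eq; lra | apply Rlt_not_eq; lra | apply Rgt_not_eq; nra | lra | nra].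

Definition Q x := 1 - Phi x.
Lemma Q_pos x : 0 < Q x.
Proof. unfold Q; generalize (Phi_lt1 x); lra. Qed.

Lemma flim_ext_loc f g (a : R) :
  (exists N, forall t, N < t -> f t = g t) -> is_lim f p_infty a -> is_lim g p_infty a.
Proof. intros H Hf. apply (is_lim_ext_loc f g); auto. Qed.

Lemma lim_inv_p f : is_lim f p_infty p_infty -> is_lim (fun t => / f t) p_infty 0.
Proof. intros H. apply (is_lim_inv f p_infty p_infty) in H. exact H. discriminate. Qed.

Lemma lim_lin_p (al z : R) : 0 < al -> is_lim (fun t => al * t + z) p_infty p_infty.
Proof.
  intros Ha. apply is_lim_spec. intros M. exists ((M - z) / al). intros t Ht.
  apply Rmult_lt_compat_l with (r := al) in Ht; auto.
  replace (al * ((M - z) / al)) with (M - z) in Ht by (field; lra). lra.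
Qed.

Lemma lim_lin_m (al z : R) : al < 0 -> is_lim (fun t => al * t + z) p_infty m_infty.
Proof.
  intros Ha. apply is_lim_spec. intros M. exists ((M - z) / al). intros t Ht.
  apply Rmult_lt_compat_l with (r := - al) in Ht; [|lra].
  replace (- al * ((M - z) / al)) with (- (M - z)) in Ht by (field; lra). lra.
Qed.

Lemma lim_invt : is_lim (fun t => / t) p_infty 0.
Proof.
  apply lim_inv_p. apply is_lim_id.
Qed.

Lemma lim_ratio_lin (al z : R) : is_lim (fun t => (al * t + z) / t) p_infty al.
Proof.
  apply flim_ext_loc with (fun t => al + z * / t).
  { exists 0. intros t Ht. field. lra. }
  apply flim_eqv with (al + z * 0). apply flim_plus. apply flim_const.
  apply flim_mult. apply flim_const. apply lim_invt. ring.
Qed.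

Lemma lim_sq_m : is_lim (fun x => - x ^ 2 / 2) p_infty m_infty.
Proof.
  apply is_lim_spec. intros M. exists (2 * Rabs M + 1). intros x Hx.
  assert (HM := Rle_abs (- M)). rewrite Rabs_Ropp in HM.
  assert (0 <= Rabs M) by apply Rabs_pos.
  simpl. nra.
Qed.

Lemma phi_lim : is_lim phi p_infty 0.
Proof.
  unfold phi, std_normal_pdf.
  apply flim_eqv with (0 * / sqrt (2 * PI)). 2: ring.
  apply flim_mult. 2: apply flim_const.
  apply (is_lim_comp exp (fun x => - x ^ 2 / 2) p_infty 0 m_infty).
  apply is_lim_exp_m. apply lim_sq_m.
  exists 0. intros; discriminate.
Qed.

Lemma lim_phi_div : is_lim (fun x => phi x / x) p_infty 0.
Proof.
  apply flim_eqv with (0 * 0). 2: ring.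
  apply flim_mult. apply phi_lim. apply lim_invt.
Qed.

Lemma Q_lim : is_lim Q p_infty 0.
Proof.
  unfold Q. apply flim_eqv with (1 - 1). 2: ring.
  apply flim_minus. apply flim_const. apply Phi_lim_p.
Qed.

Lemma Derive_Phi x : Derive Phi x = phi x.
Proof. apply is_derive_unique, Phi_derive. Qed.

Lemma ex_derive_Phi x : ex_derive Phi x.
Proof. eexists; apply Phi_derive. Qed.

Lemma decr_lim_nonneg (g dg : R -> R) (x : R) : 0 < x ->
  (forall y, 0 < y -> is_derive g y (dg y)) -> (forall y, 0 < y -> dg y < 0) ->
  is_lim g p_infty 0 -> 0 <= g x.
Proof.
  intros Hx Hd Hneg Hl.
  assert (Hdec : forall y, x < y -> g y < g x).
  { intros y Hy.
    assert (H := incr_function (fun t => - g t) 0 p_infty (fun t => - dg t)).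
    assert (- g x < - g y); [|lra].
    apply H; simpl; auto.
    - intros t Ht _. apply (is_derive_opp g t (dg t)). apply Hd; auto.
    - intros t Ht _. specialize (Hneg t Ht). lra. }
  assert (H := is_lim_le_loc g (fun _ => g x) p_infty 0 (g x)).
  simpl in H. apply H; auto.
  - exists x. intros y Hy. left. apply Hdec; auto.
  - apply is_lim_const.
Qed.

Lemma mills_upper x : 0 < x -> Q x <= phi x / x.
Proof.
  intros Hx.
  assert (H := decr_lim_nonneg (fun y => phi y / y - Q y) (fun y => - phi y / y ^ 2) x Hx).
  cut (0 <= phi x / x - Q x). lra.
  apply H.
  - intros y Hy. unfold Q, phi, std_normal_pdf. auto_derive.
    + split; [lra|]. split; [apply ex_derive_Phi|auto].
    + rewrite Derive_Phi. unfold phi, std_normal_pdf.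
      replace (- (y * (y * 1)) * / 2) with (- y ^ 2 / 2) by (unfold Rdiv; ring).
      field. sc.
  - intros y Hy. cbv beta. assert (0 < phi y) by apply phi_pos.
    assert (0 < y ^ 2) by (apply pow_lt; auto).
    assert (0 < phi y / y ^ 2) by (apply Rdiv_lt_0_compat; auto).
    unfold Rdiv in *. lra.
  - apply flim_eqv with (0 - 0). apply flim_minus. apply lim_phi_div. apply Q_lim. ring.
Qed.

Lemma lim_mills_low_aux : is_lim (fun y => y * phi y / (1 + y ^ 2)) p_infty 0.
Proof.
  apply (is_lim_le_le_loc (fun _ => 0) (fun y => phi y / y)).
  - exists 0. intros y Hy. assert (0 < phi y) by apply phi_pos. split.
    + apply Rdiv_le_0_compat. nra. nra.
    + apply Rmult_le_reg_r with (y * (1 + y ^ 2)). nra.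
      replace (y * phi y / (1 + y ^ 2) * (y * (1 + y ^ 2))) with (y * y * phi y) by (field; nra).
      replace (phi y / y * (y * (1 + y ^ 2))) with ((1 + y ^ 2) * phi y) by (field; lra).
      simpl. nra.
  - apply is_lim_const.
  - apply lim_phi_div.
Qed.

Lemma mills_lower x : 0 < x -> x * phi x / (1 + x ^ 2) <= Q x.
Proof.
  intros Hx.
  assert (H := decr_lim_nonneg (fun y => Q y - y * phi y / (1 + y ^ 2))
                 (fun y => - 2 * phi y / (1 + y ^ 2) ^ 2) x Hx).
  cut (0 <= Q x - x * phi x / (1 + x ^ 2)). lra.
  apply H.
  - intros y Hy. unfold Q, phi, std_normal_pdf. auto_derive.
    + split; [apply ex_derive_Phi|]. repeat split; auto. nra.
    + rewrite Derive_Phi. unfold phi, std_normal_pdf.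
      replace (- (y * (y * 1)) * / 2) with (- y ^ 2 / 2) by (unfold Rdiv; ring).
      field. sc.
  - intros y Hy. cbv beta. assert (0 < phi y) by apply phi_pos.
    assert (0 < (1 + y ^ 2) ^ 2) by (apply pow_lt; nra).
    assert (0 < 2 * phi y / (1 + y ^ 2) ^ 2) by (apply Rdiv_lt_0_compat; lra).
    unfold Rdiv in *. lra.
  - apply flim_eqv with (0 - 0). apply flim_minus. apply Q_lim. apply lim_mills_low_aux. ring.
Qed.

Lemma div_le_div a b c d : 0 < b -> 0 < d -> a * d <= c * b -> a / b <= c / d.
Proof.
  intros Hb Hd H.
  replace (a / b) with (a * d * / (b * d)) by (field; lra).
  replace (c / d) with (c * b * / (b * d)) by (field; lra).
  apply Rmult_le_compat_r. left; apply Rinv_0_lt_compat; nra. exact H.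
Qed.

Lemma eventually_pos (al z : R) : 0 < al ->
  exists N, forall t, N < t -> 0 < t /\ 0 < al * t + z.
Proof.
  intros Ha. exists (Rabs z / al + 1). intros t Ht.
  assert (0 <= Rabs z / al) by (apply Rdiv_le_0_compat; [apply Rabs_pos | lra]).
  assert (al * t > Rabs z + al).
  { apply Rmult_lt_compat_l with (r := al) in Ht; auto.
    replace (al * (Rabs z / al + 1)) with (Rabs z + al) in Ht by (field; lra). lra. }
  assert (- z <= Rabs z) by (rewrite <- Rabs_Ropp; apply Rle_abs). split; lra.
Qed.

Lemma hazard (al z : R) : 0 < al ->
  is_lim (fun t => phi (al * t + z) / (t * Q (al * t + z))) p_infty al.
Proof.
  intros Ha. destruct (eventually_pos al z Ha) as [N HN].
  apply (is_lim_le_le_loc (fun t => (al * t + z) / t)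
                          (fun t => (al * t + z) / t + / (al * t + z) * / t)).
  - exists N. intros t Ht. destruct (HN t Ht) as [Ht0 Hx0].
    set (x := al * t + z) in *.
    assert (Hq := Q_pos x). assert (Hp := phi_pos x).
    assert (Hu := mills_upper x Hx0). assert (Hl := mills_lower x Hx0).
    split.
    + apply div_le_div; try nra.
      apply Rmult_le_reg_r with (/ x). apply Rinv_0_lt_compat; auto.
      replace (x * (t * Q x) * / x) with (t * Q x) by (field; lra).
      replace (phi x * t * / x) with (t * (phi x / x)) by (field; lra).
      apply Rmult_le_compat_l; lra.
    + replace (x / t + / x * / t) with ((1 + x ^ 2) / (x * t)) by (field; lra).
      apply div_le_div; try nra.
      apply Rmult_le_reg_r with (/ (1 + x ^ 2)). apply Rinv_0_lt_compat; nra.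
      replace (phi x * (x * t) * / (1 + x ^ 2)) with (t * (x * phi x / (1 + x ^ 2))) by (field; nra).
      replace ((1 + x ^ 2) * (t * Q x) * / (1 + x ^ 2)) with (t * Q x) by (field; nra).
      apply Rmult_le_compat_l; lra.
  - apply lim_ratio_lin.
  - apply flim_eqv with (al + 0 * 0). 2: ring.
    apply flim_plus. apply lim_ratio_lin. apply flim_mult. 2: apply lim_invt.
    apply lim_inv_p. apply lim_lin_p; auto.
Qed.

Lemma phi_ratio_eq u v : phi u / phi v = exp ((v ^ 2 - u ^ 2) / 2).
Proof.
  unfold phi, std_normal_pdf.
  replace ((v ^ 2 - u ^ 2) / 2) with (- u ^ 2 / 2 + - (- v ^ 2 / 2)) by field.
  rewrite exp_plus, exp_Ropp. field. split. apply Rgt_not_eq, exp_pos. apply Rgt_not_eq, sqrt2PI_pos.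
Qed.

Lemma phi_ratio (al be z1 z2 : R) : 0 < al < be ->
  is_lim (fun t => phi (be * t + z1) / phi (al * t + z2)) p_infty 0.
Proof.
  intros [Ha Hb].
  apply flim_ext with (fun t => exp (t * ((al ^ 2 - be ^ 2) / 2 * t + (al * z2 - be * z1)) + (z2 ^ 2 - z1 ^ 2) / 2)).
  { intros t. rewrite phi_ratio_eq. f_equal. field. }
  apply (is_lim_comp exp _ p_infty 0 m_infty).
  - apply is_lim_exp_m.
  - eapply is_lim_plus. 2: apply is_lim_const.
    eapply (is_lim_mult (fun t => t)). apply is_lim_id. apply lim_lin_m.
    assert (al ^ 2 < be ^ 2) by nra. lra. exact I. reflexivity.
  - exists 0. intros; discriminate.
Qed.

Lemma Q_ratio (al be z1 z2 : R) : 0 < al < be ->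
  is_lim (fun t => Q (be * t + z1) / Q (al * t + z2)) p_infty 0.
Proof.
  intros [Ha Hb].
  destruct (eventually_pos al z2 Ha) as [N1 HN1].
  destruct (eventually_pos be z1 ltac:(lra)) as [N2 HN2].
  apply (is_lim_le_le_loc (fun _ => 0)
     (fun t => phi (be * t + z1) / phi (al * t + z2) *
               ((/ t * / t + ((al * t + z2) / t) ^ 2) / ((be * t + z1) / t * ((al * t + z2) / t))))).
  - exists (Rmax N1 N2). intros t Ht.
    destruct (HN1 t (Rle_lt_trans _ _ _ (Rmax_l _ _) Ht)) as [Ht0 Hx2].
    destruct (HN2 t (Rle_lt_trans _ _ _ (Rmax_r _ _) Ht)) as [_ Hx1].
    set (x1 := be * t + z1) in *. set (x2 := al * t + z2) in *.
    assert (Hq1 := Q_pos x1). assert (Hq2 := Q_pos x2).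
    assert (Hp1 := phi_pos x1). assert (Hp2 := phi_pos x2).
    assert (Hu := mills_upper x1 Hx1). assert (Hl := mills_lower x2 Hx2).
    split. apply Rdiv_le_0_compat; lra.
    replace (phi x1 / phi x2 * ((/ t * / t + (x2 / t) ^ 2) / (x1 / t * (x2 / t))))
      with ((phi x1 / x1) / (x2 * phi x2 / (1 + x2 ^ 2))) by (field; sc).
    apply div_le_div; auto.
    apply Rdiv_lt_0_compat; nra.
    apply Rmult_le_compat; try lra.
    apply Rdiv_le_0_compat; nra.
  - apply is_lim_const.
  - apply flim_eqv with (0 * ((0 * 0 + al * al) / (be * al))).
    2: ring.
    apply flim_mult. apply phi_ratio; lra.
    apply flim_div. apply flim_plus. apply flim_mult; apply lim_invt.
    apply flim_ext with (fun t => (al * t + z2) / t * ((al * t + z2) / t)). intros; ring.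
    apply flim_mult; apply lim_ratio_lin.
    apply flim_mult; apply lim_ratio_lin.
    apply Rgt_not_eq. nra.
Qed.

Lemma lim_Phi_lin (al z : R) : 0 < al -> is_lim (fun t => Phi (al * t + z)) p_infty 1.
Proof.
  intros Ha. apply (is_lim_comp Phi _ p_infty 1 p_infty). apply Phi_lim_p.
  apply lim_lin_p; auto. exists 0; intros; discriminate.
Qed.

Lemma lim_Q_lin (al z : R) : 0 < al -> is_lim (fun t => Q (al * t + z)) p_infty 0.
Proof.
  intros Ha. apply (is_lim_comp Q _ p_infty 0 p_infty). apply Q_lim.
  apply lim_lin_p; auto. exists 0; intros; discriminate.
Qed.

Lemma lim_phi_lin (al z : R) : 0 < al -> is_lim (fun t => phi (al * t + z)) p_infty 0.
Proof.
  intros Ha. apply (is_lim_comp phi _ p_infty 0 p_infty). apply phi_lim.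
  apply lim_lin_p; auto. exists 0; intros; discriminate.
Qed.

Lemma Phi_Q y : Phi (- y) = Q y.
Proof. unfold Q; apply Phi_sym. Qed.

Definition KU (a z t : R) : R :=
  a * phi (a * t - z) / (2 * t * (Phi (a * t - z) * (1 - Phi (a * t - z)))).

Lemma KU_lim (a z : R) :
  is_lim (KU a z) p_infty ((1/2 - (if Rlt_dec 0 a then 0 else 1)) * a ^ 2).
Proof.
  destruct (Rlt_dec 0 a) as [Ha|Ha].
  - apply flim_ext_loc with (fun t => a / 2 * (phi (a * t + - z) / (t * Q (a * t + - z))) * / Phi (a * t + - z)).
    { exists 0. intros t Ht. unfold KU, Q.
      replace (a * t + - z) with (a * t - z) by ring.
      assert (H1 := Phi_gt0 (a * t - z)). assert (H2 := Phi_lt1 (a * t - z)).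
      field. sc. }
    apply flim_eqv with (a / 2 * a * / 1).
    2: field.
    apply flim_mult. apply flim_mult. apply flim_const. apply hazard; auto.
    apply flim_inv. apply lim_Phi_lin; auto. lra.
  - destruct (Req_dec a 0) as [H0|H0].
    + subst a. apply flim_ext with (fun _ => 0). intros t. unfold KU. unfold Rdiv. ring.
      apply flim_eqv with 0. apply flim_const. ring.
    + assert (Hn : 0 < - a) by lra.
      apply flim_ext_loc with (fun t => a / 2 * (phi (- a * t + z) / (t * Q (- a * t + z))) * / Phi (- a * t + z)).
      { exists 0. intros t Ht. unfold KU.
        replace (a * t - z) with (- (- a * t + z)) by ring.
        rewrite phi_even, Phi_Q. unfold Q.
        assert (H1 := Phi_gt0 (- a * t + z)). assert (H2 := Phi_lt1 (- a * t + z)).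
        field. sc. }
      apply flim_eqv with (a / 2 * (- a) * / 1).
      2: field.
      apply flim_mult. apply flim_mult. apply flim_const. apply hazard; auto.
      apply flim_inv. apply lim_Phi_lin; auto. lra.
Qed.

Lemma WA (u1 u2 r : R -> R) (A B : R) :
  is_lim u1 p_infty A -> is_lim u2 p_infty B ->
  (exists N, forall t, N < t -> 0 < r t) -> (A = B \/ is_lim r p_infty 0) ->
  is_lim (fun t => (u1 t + u2 t * r t) / (1 + r t)) p_infty A.
Proof.
  intros H1 H2 [N HN] [E|Hr].
  - subst B. apply is_lim_spec. intros eps.
    apply is_lim_spec in H1. apply is_lim_spec in H2.
    specialize (H1 eps). specialize (H2 eps).
    destruct H1 as [N1 H1]. destruct H2 as [N2 H2].
    exists (Rmax N (Rmax N1 N2)). intros t Ht.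
    assert (Ht0 : N < t) by (eapply Rle_lt_trans; [apply Rmax_l | exact Ht]).
    assert (Ht1 : N1 < t) by (eapply Rle_lt_trans; [eapply Rle_trans; [apply Rmax_l | apply Rmax_r] | exact Ht]).
    assert (Ht2 : N2 < t) by (eapply Rle_lt_trans; [eapply Rle_trans; [apply Rmax_r | apply Rmax_r] | exact Ht]).
    specialize (HN t Ht0). specialize (H1 t Ht1). specialize (H2 t Ht2).
    apply Rabs_def2 in H1. apply Rabs_def2 in H2.
    assert (Heps := cond_pos eps).
    replace ((u1 t + u2 t * r t) / (1 + r t) - A) with (((u1 t - A) + (u2 t - A) * r t) / (1 + r t)) by (field; lra).
    apply Rabs_def1.
    + apply Rmult_lt_reg_r with (1 + r t); [lra|].
      replace (((u1 t - A) + (u2 t - A) * r t) / (1 + r t) * (1 + r t)) with ((u1 t - A) + (u2 t - A) * r t) by (field; lra).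
      nra.
    + apply Rmult_lt_reg_r with (1 + r t); [lra|].
      replace (((u1 t - A) + (u2 t - A) * r t) / (1 + r t) * (1 + r t)) with ((u1 t - A) + (u2 t - A) * r t) by (field; lra).
      nra.
  - apply flim_eqv with ((A + B * 0) / (1 + 0)). 2: field.
    apply flim_div. apply flim_plus. auto. apply flim_mult; auto.
    apply flim_plus. apply flim_const. auto. lra.
Qed.

Definition TF (a b z t : R) : R := Phi (a * t - z) - Phi (b * t - z).
Definition KF (a b z t : R) : R :=
  (a * phi (a * t - z) - b * phi (b * t - z)) / (2 * t * (TF a b z t * (1 - TF a b z t))).

Lemma TF_sym a b z t : TF (- b) (- a) (- z) t = TF a b z t.
Proof.
  unfold TF.
  replace (- b * t - - z) with (- (b * t - z)) by ring.
  replace (- a * t - - z) with (- (a * t - z)) by ring.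
  rewrite !Phi_sym. ring.
Qed.

Lemma KF_sym a b z t : KF (- b) (- a) (- z) t = KF a b z t.
Proof.
  unfold KF. rewrite TF_sym. f_equal.
  replace (- b * t - - z) with (- (b * t - z)) by ring.
  replace (- a * t - - z) with (- (a * t - z)) by ring.
  rewrite !phi_even. ring.
Qed.

Lemma TF_bounds a b z t : b < a -> 0 < t -> 0 < TF a b z t < 1.
Proof.
  intros Hab Ht. unfold TF.
  assert (H0 : b * t - z < a * t - z) by nra.
  assert (H := Phi_incr _ _ H0).
  assert (H1 := Phi_lt1 (a * t - z)). assert (H2 := Phi_gt0 (b * t - z)). lra.
Qed.

Lemma KF_in (a b z : R) : 0 < a -> a <= - b ->
  is_lim (KF a b z) p_infty (a ^ 2 / 2).
Proof.
  intros Ha Hab.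
  set (Q1 := fun t => Q (a * t + - z)). set (Q2 := fun t => Q (- b * t + z)).
  apply flim_ext_loc with
    (fun t => ((a / 2 * (phi (a * t + - z) / (t * Q1 t)) +
                (- b / 2 * (phi (- b * t + z) / (t * Q2 t))) * (Q2 t / Q1 t)) / (1 + Q2 t / Q1 t))
              * / (1 - Q1 t - Q2 t)).
  { exists 0. intros t Ht. unfold KF.
    assert (HT : TF a b z t = 1 - Q1 t - Q2 t).
    { unfold TF, Q1, Q2, Q. replace (b * t - z) with (- (- b * t + z)) by ring.
      rewrite Phi_sym. replace (a * t + - z) with (a * t - z) by ring. ring. }
    assert (HTb := TF_bounds a b z t ltac:(lra) Ht).
    rewrite HT in *.
    assert (Hq1 := Q_pos (a * t + - z)). assert (Hq2 := Q_pos (- b * t + z)).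
    fold (Q1 t) in Hq1. fold (Q2 t) in Hq2.
    replace (b * t - z) with (- (- b * t + z)) by ring. rewrite phi_even.
    replace (a * t - z) with (a * t + - z) by ring.
    field. sc. }
  apply flim_eqv with ((a ^ 2 / 2) * / (1 - 0 - 0)). 2: field.
  apply flim_mult.
  - apply (WA _ _ (fun t => Q2 t / Q1 t) (a ^ 2 / 2) (b ^ 2 / 2)).
    + apply flim_eqv with (a / 2 * a). 2: field. apply flim_mult. apply flim_const.
      apply hazard; auto.
    + apply flim_eqv with (- b / 2 * - b). 2: field. apply flim_mult. apply flim_const.
      apply hazard; lra.
    + exists 0. intros t _. apply Rdiv_lt_0_compat; apply Q_pos.
    + destruct (Req_dec a (- b)) as [E|E].
      * left. rewrite E. field.
      * right. apply Q_ratio. lra.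
  - apply flim_inv. 2: lra. apply flim_minus. apply flim_minus. apply flim_const.
    apply lim_Q_lin; auto. apply lim_Q_lin; lra.
Qed.

Lemma KF_out (a b z : R) : a <= 0 -> b < a ->
  is_lim (KF a b z) p_infty (- (a ^ 2) / 2).
Proof.
  intros Ha Hab.
  destruct (Req_dec a 0) as [H0|H0].
  - subst a.
    apply flim_ext_loc with
      (fun t => - b / 2 * (phi (- b * t + z) * / t) * / (TF 0 b z t * (1 - TF 0 b z t))).
    { exists 0. intros t Ht. unfold KF.
      assert (HTb := TF_bounds 0 b z t Hab Ht).
      replace (b * t - z) with (- (- b * t + z)) by ring. rewrite phi_even.
      field. sc. }
    assert (HT : is_lim (TF 0 b z) p_infty (Phi (- z))).
    { apply flim_ext with (fun t => Phi (- z) - Q (- b * t + z)).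
      { intros t. unfold TF, Q. replace (b * t - z) with (- (- b * t + z)) by ring.
        rewrite (Phi_sym (- b * t + z)). replace (0 * t - z) with (- z) by ring. ring. }
      apply flim_eqv with (Phi (- z) - 0). 2: ring.
      apply flim_minus. apply flim_const. apply lim_Q_lin; lra. }
    assert (H1 := Phi_gt0 (- z)). assert (H2 := Phi_lt1 (- z)).
    apply flim_eqv with (- b / 2 * (0 * 0) * / (Phi (- z) * (1 - Phi (- z)))).
    2: field; sc.
    apply flim_mult. apply flim_mult. apply flim_const.
    apply flim_mult. apply lim_phi_lin; lra. apply lim_invt.
    apply flim_inv. apply flim_mult. auto. apply flim_minus. apply flim_const. auto.
    apply Rgt_not_eq. nra.
  - assert (Ha' : 0 < - a) by lra.
    set (Q1 := fun t => Q (- a * t + z)). set (Q2 := fun t => Q (- b * t + z)).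
    apply flim_ext_loc with
      (fun t => (a / 2 * (phi (- a * t + z) / (t * Q1 t)) +
                 (- b / 2) * (phi (- b * t + z) / phi (- a * t + z)) * (phi (- a * t + z) / (t * Q1 t)))
                / (1 - Q2 t / Q1 t) * / (1 - TF a b z t)).
    { exists 0. intros t Ht. unfold KF.
      assert (HTb := TF_bounds a b z t Hab Ht).
      assert (HT : TF a b z t = Q1 t - Q2 t).
      { unfold TF, Q1, Q2, Q. replace (b * t - z) with (- (- b * t + z)) by ring.
        replace (a * t - z) with (- (- a * t + z)) by ring.
        rewrite !Phi_sym. ring. }
      assert (Hq1 := Q_pos (- a * t + z)). fold (Q1 t) in Hq1.
      assert (Hp1 := phi_pos (- a * t + z)).
      replace (b * t - z) with (- (- b * t + z)) by ring.
      replace (a * t - z) with (- (- a * t + z)) by ring. rewrite !phi_even.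
      assert (HQ : Q1 t - Q2 t <> 0) by lra.
      assert (HQ' : 1 - Q2 t / Q1 t <> 0).
      { replace (1 - Q2 t / Q1 t) with ((Q1 t - Q2 t) / Q1 t) by (field; lra).
        apply Rgt_not_eq. apply Rdiv_lt_0_compat; lra. }
      rewrite HT in HTb |- *. field. sc. }
    apply flim_eqv with ((a / 2 * (- a) + - b / 2 * 0 * (- a)) / (1 - 0) * / (1 - 0)).
    2: field.
    apply flim_mult. apply flim_div. apply flim_plus.
    + apply flim_mult. apply flim_const. apply hazard; auto.
    + apply flim_mult. apply flim_mult. apply flim_const. apply phi_ratio. lra.
      apply hazard; auto.
    + apply flim_minus. apply flim_const. apply Q_ratio. lra.
    + lra.
    + apply flim_inv. 2: lra. apply flim_minus. apply flim_const.
      apply flim_ext with (fun t => Q1 t - Q2 t).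
      { intros t. unfold TF, Q1, Q2, Q. replace (b * t - z) with (- (- b * t + z)) by ring.
        replace (a * t - z) with (- (- a * t + z)) by ring. rewrite !Phi_sym. ring. }
      apply flim_eqv with (0 - 0). 2: ring. apply flim_minus; apply lim_Q_lin; lra.
Qed.

Lemma KF_lim (a b z : R) : b < a ->
  is_lim (KF a b z) p_infty
    ((1/2 - (if Rlt_dec b 0 then if Rlt_dec 0 a then 0 else 1 else 1)) * Rmin (a ^ 2) (b ^ 2)).
Proof.
  intros Hab.
  destruct (Rlt_dec b 0) as [Hb|Hb]; [destruct (Rlt_dec 0 a) as [Ha|Ha]|].
  - destruct (Rle_dec a (- b)) as [H|H].
    + rewrite Rmin_left by nra. apply flim_eqv with (a ^ 2 / 2). 2: field.
      apply KF_in; auto.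
    + rewrite Rmin_right by nra. apply flim_eqv with ((- b) ^ 2 / 2). 2: field.
      apply flim_ext with (KF (- b) (- a) (- z)). intros; apply KF_sym.
      apply KF_in; lra.
  - rewrite Rmin_left by nra. apply flim_eqv with (- (a ^ 2) / 2). 2: field.
    apply KF_out; lra.
  - rewrite Rmin_right by nra. apply flim_eqv with (- ((- b) ^ 2) / 2). 2: field.
    apply flim_ext with (KF (- b) (- a) (- z)). intros; apply KF_sym.
    apply KF_out; lra.
Qed.

Ltac toR := match goal with |- ?a = ?b => change (@eq R a b) end.

Lemma finish (f T dT K : R -> R) (L : Rbar) :
  (forall c, 0 < c -> f c = logit (T (sqrt c))) ->
  (forall t, 0 < t -> is_derive T t (dT t)) ->
  (forall t, 0 < t -> 0 < T t < 1) ->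
  (forall t, 0 < t -> dT t / (2 * t) / (T t * (1 - T t)) = K t) ->
  is_lim K p_infty L ->
  (exists C : R, forall c, C < c -> ex_derive f c) /\ is_lim (fun c => Derive f c) p_infty L.
Proof.
  intros Hf HT HT01 HK HL.
  assert (HD : forall c, 0 < c -> is_derive f c (K (sqrt c))).
  { intros c Hc.
    assert (Hs : 0 < sqrt c) by (apply sqrt_lt_R0; auto).
    assert (H01 := HT01 _ Hs).
    assert (Hds : is_derive (fun c => T (sqrt c)) c (1 / (2 * sqrt c) * dT (sqrt c))).
    { apply (is_derive_comp T (fun c => sqrt c)). apply HT; auto.
      apply (is_derive_sqrt (fun x => x) c 1). apply (is_derive_id (K := R_AbsRing)). auto. }
    assert (Hl : is_derive (fun c => logit (T (sqrt c))) c
                  ((1 / (2 * sqrt c) * dT (sqrt c)) * / T (sqrt c)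
                   - (- (1 / (2 * sqrt c) * dT (sqrt c))) * / (1 - T (sqrt c)))).
    { unfold logit.
      apply (is_derive_minus (fun c => ln (T (sqrt c))) (fun c => ln (1 - T (sqrt c)))).
      - eapply is_derive_eq. apply (is_derive_comp ln (fun c => T (sqrt c))).
        apply is_derive_ln. lra. exact Hds. toR. unfold scal; simpl; unfold mult; simpl. ring.
      - eapply is_derive_eq. apply (is_derive_comp ln (fun c => 1 - T (sqrt c))).
        apply is_derive_ln. lra.
        eapply is_derive_eq. apply (is_derive_minus (fun _ => 1) (fun c => T (sqrt c))).
        apply is_derive_const. exact Hds. reflexivity.
        toR. unfold scal, minus, plus, opp, zero; simpl. unfold mult; simpl. ring. }
    eapply is_derive_eq.
    - apply (is_derive_ext_loc (fun c => logit (T (sqrt c)))). 2: exact Hl.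
      apply (filter_imp (fun u => 0 < u)). intros u Hu. symmetry. apply Hf; auto.
      apply open_gt. exact Hc.
    - rewrite <- (HK _ Hs). field. sc. }
  split.
  - exists 0. intros c Hc. eexists. apply HD; auto.
  - apply (is_lim_ext_loc (fun c => K (sqrt c))).
    { exists 0. intros c Hc. symmetry. apply is_derive_unique. apply HD; auto. }
    apply (is_lim_comp K sqrt p_infty L p_infty). exact HL.
    apply is_lim_sqrt_p. apply is_lim_id.
    exists 0. intros; discriminate.
Qed.

Lemma std_arg_fin (x d L z c : R) : 0 < c -> 0 < L ->
  std_arg (Finite x) (delta_hat d L z c) (sqrt (/ c * L)) = Finite ((x - d) / sqrt L * sqrt c - z).
Proof.
  intros Hc HL. simpl. f_equal. unfold delta_hat.
  assert (Hsc : 0 < sqrt c) by (apply sqrt_lt_R0; auto).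
  assert (HsL : 0 < sqrt L) by (apply sqrt_lt_R0; auto).
  assert (E1 : sqrt (/ c * L) = sqrt L / sqrt c).
  { rewrite sqrt_mult. rewrite sqrt_inv. field. lra. left; apply Rinv_0_lt_compat; auto. lra. }
  assert (E2 : sqrt (L / c) = sqrt L / sqrt c).
  { unfold Rdiv. rewrite Rmult_comm. rewrite E1. reflexivity. }
  rewrite E1, E2. field. sc.
Qed.

Lemma Acoef_sq (x d L : R) : 0 < L -> ((x - d) / sqrt L) ^ 2 = (x - d) ^ 2 / L.
Proof.
  intros HL. assert (HsL : 0 < sqrt L) by (apply sqrt_lt_R0; auto).
  unfold Rdiv. rewrite Rpow_mult_distr. f_equal. rewrite pow_inv. f_equal.
  simpl. rewrite Rmult_1_r. apply sqrt_sqrt. lra.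
Qed.

Lemma Acoef_pos (x d L : R) : 0 < L -> (0 < (x - d) / sqrt L <-> d < x).
Proof.
  intros HL. assert (HsL : 0 < sqrt L) by (apply sqrt_lt_R0; auto). split; intros H.
  - apply Rmult_lt_compat_r with (r := sqrt L) in H; auto.
    replace ((x - d) / sqrt L * sqrt L) with (x - d) in H by (field; lra). lra.
  - apply Rdiv_lt_0_compat; lra.
Qed.

Lemma Acoef_neg (x d L : R) : 0 < L -> ((x - d) / sqrt L < 0 <-> x < d).
Proof.
  intros HL. assert (HsL : 0 < sqrt L) by (apply sqrt_lt_R0; auto). split; intros H.
  - apply Rmult_lt_compat_r with (r := sqrt L) in H; auto.
    replace ((x - d) / sqrt L * sqrt L) with (x - d) in H by (field; lra). lra.
  - replace ((x - d) / sqrt L) with (- ((d - x) / sqrt L)) by (field; lra).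
    assert (0 < (d - x) / sqrt L) by (apply Rdiv_lt_0_compat; lra). lra.
Qed.

Lemma Acoef_lt (x y d L : R) : 0 < L -> x < y -> (x - d) / sqrt L < (y - d) / sqrt L.
Proof.
  intros HL Hxy. assert (HsL : 0 < sqrt L) by (apply sqrt_lt_R0; auto).
  unfold Rdiv. apply Rmult_lt_compat_r. apply Rinv_0_lt_compat; auto. lra.
Qed.

Lemma is_derive_Phi_lin (a z t : R) : is_derive (fun t => Phi (a * t - z)) t (a * phi (a * t - z)).
Proof.
  eapply is_derive_eq. apply (is_derive_comp Phi (fun t => a * t - z)). apply Phi_derive.
  auto_derive; auto. toR. unfold scal; simpl; unfold mult; simpl. ring.
Qed.

Theorem theorem1 (delta_r Lambda : R) (dL dU : Rbar) (u z : R) :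
  0 < Lambda ->
  Rbar_lt dL dU ->
  ~ (dL = m_infty /\ dU = p_infty) ->
  0 < u < 1 ->
  Phi z = u ->
  (exists C : R, forall c : R, C < c ->
      ex_derive (fun c' => logit (tau delta_r Lambda z dL dU c')) c) /\
  is_lim (fun c => Derive (fun c' => logit (tau delta_r Lambda z dL dU c')) c)
    p_infty
    (Rbar_mult (Finite (1 / 2 - ind_notin dL dU delta_r))
       (Rbar_min (sq_scaled dU delta_r Lambda) (sq_scaled dL delta_r Lambda))).
Proof.
  intros HL Hlt Hnot _ _.
  destruct dL as [xL| |]; destruct dU as [xU| |]; simpl in Hlt; try contradiction.
  - (* both finite *)
    set (a := (xU - delta_r) / sqrt Lambda). set (b := (xL - delta_r) / sqrt Lambda).
    assert (Hab : b < a) by (apply Acoef_lt; auto).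
    replace (Rbar_mult _ _) with (Finite ((1/2 - (if Rlt_dec b 0 then if Rlt_dec 0 a then 0 else 1 else 1)) * Rmin (a ^ 2) (b ^ 2))).
    2:{ unfold ind_notin, sq_scaled. unfold a, b. rewrite !Acoef_sq by auto.
        simpl. f_equal. f_equal. f_equal.
        destruct (Rbar_lt_dec xL delta_r) as [H1|H1]; destruct (Rlt_dec ((xL - delta_r) / sqrt Lambda) 0) as [H2|H2];
          simpl in H1; rewrite Acoef_neg in H2 by auto; try tauto.
        destruct (Rbar_lt_dec delta_r xU) as [H3|H3]; destruct (Rlt_dec 0 ((xU - delta_r) / sqrt Lambda)) as [H4|H4];
          simpl in H3; rewrite Acoef_pos in H4 by auto; try tauto. }
    apply (finish _ (TF a b z) (fun t => a * phi (a * t - z) - b * phi (b * t - z)) (KF a b z)).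
    + intros c Hc. unfold tau. rewrite !std_arg_fin by auto. reflexivity.
    + intros t Ht. unfold TF. apply (is_derive_minus (fun t => Phi (a * t - z)) (fun t => Phi (b * t - z))).
      apply is_derive_Phi_lin. apply is_derive_Phi_lin.
    + intros t Ht. apply TF_bounds; auto.
    + intros t Ht. unfold KF. assert (H := TF_bounds a b z t Hab Ht). field. sc.
    + apply KF_lim; auto.
  - (* dL finite, dU = +oo *)
    set (b := (xL - delta_r) / sqrt Lambda).
    replace (Rbar_mult _ _) with (Finite ((1/2 - (if Rlt_dec 0 (- b) then 0 else 1)) * (- b) ^ 2)).
    2:{ unfold ind_notin, sq_scaled. unfold b.
        replace ((- ((xL - delta_r) / sqrt Lambda)) ^ 2) with (((xL - delta_r) / sqrt Lambda) ^ 2) by ring.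
        rewrite !Acoef_sq by auto.
        simpl. f_equal. f_equal. f_equal.
        destruct (Rbar_lt_dec xL delta_r) as [H1|H1]; destruct (Rlt_dec 0 (- ((xL - delta_r) / sqrt Lambda))) as [H2|H2];
          simpl in H1.
        - destruct (Rbar_lt_dec delta_r p_infty) as [H3|H3]; simpl in H3; tauto.
        - exfalso. apply H2. assert (((xL - delta_r) / sqrt Lambda) < 0) by (apply Acoef_neg; auto). lra.
        - exfalso. apply H1. apply (Acoef_neg xL delta_r Lambda HL). lra.
        - reflexivity. }
    apply (finish _ (fun t => 1 - Phi (b * t - z)) (fun t => - (b * phi (b * t - z))) (KU (- b) (- z))).
    + intros c Hc. unfold tau. rewrite !std_arg_fin by auto. reflexivity.
    + intros t Ht. eapply is_derive_eq.
      apply (is_derive_minus (fun _ => 1) (fun t => Phi (b * t - z))).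
      apply is_derive_const. apply is_derive_Phi_lin.
      toR. unfold minus, plus, opp, zero; simpl. ring.
    + intros t Ht. assert (H1 := Phi_gt0 (b * t - z)). assert (H2 := Phi_lt1 (b * t - z)). lra.
    + intros t Ht. unfold KU.
      replace (- b * t - - z) with (- (b * t - z)) by ring.
      rewrite phi_even, Phi_sym.
      assert (H1 := Phi_gt0 (b * t - z)). assert (H2 := Phi_lt1 (b * t - z)).
      field. sc.
    + apply KU_lim.
  - (* dL = -oo, dU finite *)
    set (a := (xU - delta_r) / sqrt Lambda).
    replace (Rbar_mult _ _) with (Finite ((1/2 - (if Rlt_dec 0 a then 0 else 1)) * a ^ 2)).
    2:{ unfold ind_notin, sq_scaled. unfold a.
        rewrite !Acoef_sq by auto.
        simpl. f_equal. f_equal. f_equal.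
        destruct (Rbar_lt_dec m_infty delta_r) as [H1|H1]; simpl in H1; [|tauto].
        destruct (Rbar_lt_dec delta_r xU) as [H3|H3]; destruct (Rlt_dec 0 ((xU - delta_r) / sqrt Lambda)) as [H4|H4];
          simpl in H3; rewrite Acoef_pos in H4 by auto; tauto. }
    apply (finish _ (fun t => Phi (a * t - z) - 0) (fun t => a * phi (a * t - z)) (KU a z)).
    + intros c Hc. unfold tau. rewrite !std_arg_fin by auto. reflexivity.
    + intros t Ht. eapply is_derive_ext. 2: apply is_derive_Phi_lin. intros; simpl; ring.
    + intros t Ht. assert (H1 := Phi_gt0 (a * t - z)). assert (H2 := Phi_lt1 (a * t - z)). lra.
    + intros t Ht. unfold KU.
      assert (H1 := Phi_gt0 (a * t - z)). assert (H2 := Phi_lt1 (a * t - z)).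
      field. sc.
    + apply KU_lim.
  - exfalso. apply Hnot. split; reflexivity.
Qed.
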